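(* Let $G$ be a group and $N$ a normal subgroup of $G$. If $S=\bigoplus_{g\in G}S_g$ is a nearly epsilon-strongly $G$-graded ring, then the induced $G/N$-grading $\{S_C\}_{C\in G/N}$ is nearly epsilon-strong.
   Context: Rings are associative, not necessarily unital; $AB$ denotes finite sums of products. A $G$-grading: $S=\bigoplus_gS_g$, $S_gS_h\subseteq S_{gh}$. A grading $\{T_h\}_{h\in H}$ is nearly epsilon-strong if $T_hT_{h^{-1}}T_h=T_h$ for all $h$ and each ring $T_hT_{h^{-1}}$ is $s$-unital (every $x$ in a ring $R$ satisfies $x\in xR\cap Rx$); equivalently, for each $h$ and $t\in T_h$ there are $\epsilon\in T_hT_{h^{-1}}$, $\epsilon'\in T_{h^{-1}}T_h$ with $\epsilon t=t=t\epsilon'$. Induced grading: $S_C=\bigoplus_{g\in C}S_g$. *)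

(* Defs.v *)
From HB Require Import structures.
From mathcomp Require Import all_boot all_algebra.
From mathcomp Require Import monoid.
From Stdlib Require List.
Set Implicit Arguments.
Unset Strict Implicit.
Unset Printing Implicit Defensive.
Import GRing.Theory.

Local Open Scope ring_scope.

Definition is_nonunital_ring (S : zmodType) (m : S -> S -> S) : Prop :=
  [/\ (forall x y z, m x (m y z) = m (m x y) z),
      (forall x y z, m x (y + z) = m x y + m x z) &
      (forall x y z, m (x + y) z = m x z + m y z)].

Definition set_eq (S : Type) (A B : S -> Prop) : Prop := forall x, A x <-> B x.

Definition setmul (S : zmodType) (m : S -> S -> S) (A B : S -> Prop) : S -> Prop :=
  fun x => exists l : seq (S * S),
    (forall p, List.In p l -> A p.1 /\ B p.2) /\
    x = \sum_(p <- l) m p.1 p.2.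

Definition s_unital (S : zmodType) (m : S -> S -> S) (R : S -> Prop) : Prop :=
  forall x, R x -> (exists r, R r /\ x = m x r) /\ (exists r, R r /\ x = m r x).

Definition is_add_subgroup (S : zmodType) (A : S -> Prop) : Prop :=
  A 0 /\ (forall x y, A x -> A y -> A (x - y)).

Definition is_grading (G : groupType) (S : zmodType) (m : S -> S -> S)
    (T : G -> S -> Prop) : Prop :=
  [/\ (forall g, is_add_subgroup (T g)),
      (forall g h a b, T g a -> T h b -> T (mul g h) (m a b)),
      (forall x, exists l : seq (G * S),
          (forall p, List.In p l -> T p.1 p.2) /\ x = \sum_(p <- l) p.2) &
      (forall l : seq (G * S), List.NoDup (map fst l) ->
          (forall p, List.In p l -> T p.1 p.2) ->
          \sum_(p <- l) p.2 = 0 -> forall p, List.In p l -> p.2 = 0)].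

Definition nearly_eps_strong_family (I : Type) (inv_i : I -> I)
    (S : zmodType) (m : S -> S -> S) (T : I -> S -> Prop) : Prop :=
  forall h,
    set_eq (setmul m (setmul m (T h) (T (inv_i h))) (T h)) (T h) /\
    s_unital m (setmul m (T h) (T (inv_i h))).

Definition nearly_eps_strong (G : groupType) (S : zmodType) (m : S -> S -> S)
    (T : G -> S -> Prop) : Prop :=
  is_grading m T /\ nearly_eps_strong_family (@inv G) m T.

Definition is_normal_subgroup (G : groupType) (N : G -> Prop) : Prop :=
  [/\ N one,
      (forall x y, N x -> N y -> N (mul x y)),
      (forall x, N x -> N (inv x)) &
      (forall g n, N n -> N (mul (mul g n) (inv g)))].

(** Induced grading: for the coset C = g N, S_C = (+)_{k in gN} S_k, i.e. the
    finite sums of homogeneous elements of degrees k with g^-1 k in N. *)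
Definition induced_component (G : groupType) (S : zmodType)
    (T : G -> S -> Prop) (N : G -> Prop) (g : G) : S -> Prop :=
  fun x => exists l : seq (G * S),
    (forall p, List.In p l -> N (mul (inv g) p.1) /\ T p.1 p.2) /\
    x = \sum_(p <- l) p.2.

(* Main.v *)
Require Import Defs.
From mathcomp Require Import all_boot all_algebra.
From mathcomp Require Import monoid.
From Stdlib Require List.
Set Implicit Arguments.
Unset Strict Implicit.
Unset Printing Implicit Defensive.
Import GRing.Theory.
Local Open Scope ring_scope.

Section Ring.
Variable (S : zmodType) (m : S -> S -> S).
Hypothesis Hr : is_nonunital_ring m.

Lemma mA x y z : m x (m y z) = m (m x y) z. Proof. by case: Hr. Qed.
Lemma mDr x y z : m x (y + z) = m x y + m x z. Proof. by case: Hr. Qed.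
Lemma mDl x y z : m (x + y) z = m x z + m y z. Proof. by case: Hr. Qed.
Lemma m0r x : m x 0 = 0.
Proof. have h : m x 0 + m x 0 = m x 0 + 0 by rewrite -mDr !addr0.
exact: addrI h. Qed.
Lemma m0l x : m 0 x = 0.
Proof. have h : m 0 x + m 0 x = m 0 x + 0 by rewrite -mDl !addr0.
exact: addrI h. Qed.
Lemma mNr x y : m x (- y) = - m x y.
Proof. have : m x (-y) + m x y = 0 by rewrite -mDr addNr m0r.
by move/eqP; rewrite addr_eq0 => /eqP. Qed.
Lemma mNl x y : m (- x) y = - m x y.
Proof. have : m (-x) y + m x y = 0 by rewrite -mDl addNr m0l.
by move/eqP; rewrite addr_eq0 => /eqP. Qed.
Lemma mBr x y z : m x (y - z) = m x y - m x z.
Proof. by rewrite mDr mNr. Qed.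
Lemma mBl x y z : m (x - y) z = m x z - m y z.
Proof. by rewrite mDl mNl. Qed.

Lemma tominaga (E P : S -> Prop) e0 :
  (forall e f, E e -> E f -> E (e + f - m e f)) ->
  (forall y e, P y -> E e -> P (y - m y e)) ->
  (forall y, P y -> exists e, E e /\ m y e = y) -> E e0 ->
  forall zs : seq S, (forall z, List.In z zs -> P z) ->
  exists e, E e /\ forall z, List.In z zs -> m z e = z.
Proof.
move=> HE HP HU He0 zs; move Hn: (size zs) => n.
elim: n zs Hn => [|n IH] [|z zs] //=; try by exists e0; split.
move=> [Hn] Hzs.
have [e [Ee ze]] := HU z (Hzs z (or_introl erefl)).
have [f [Ef Hf]] : exists f, E f /\ forall w, List.In w [seq y - m y e | y <- zs] -> m w f = w.
  apply: IH; first by rewrite size_map.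
  move=> w /List.in_map_iff [y [<- Hy]].
  exact: HP (Hzs y (or_intror Hy)) Ee.
exists (e + f - m e f); split; first exact: HE.
move=> w [<-|Hw].
  by rewrite mBr mDr mA ze addrK.
have := Hf (w - m w e) (List.in_map _ _ _ Hw).
rewrite mBl => h.
by rewrite mBr mDr mA -addrA h addrC subrK.
Qed.
End Ring.

Lemma opp_ring (S : zmodType) (m : S -> S -> S) :
  is_nonunital_ring m -> is_nonunital_ring (fun a b => m b a).
Proof. by case=> A Dr Dl; split=> *; rewrite ?A ?Dr ?Dl. Qed.

Section SetMul.
Variable (S : zmodType) (m : S -> S -> S).
Hypothesis Hr : is_nonunital_ring m.

Lemma setmul_ind (A B Q : S -> Prop) :
  Q 0 -> (forall x y, Q x -> Q y -> Q (x + y)) ->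
  (forall a b, A a -> B b -> Q (m a b)) ->
  forall x, setmul m A B x -> Q x.
Proof.
move=> Q0 QD Qp x [l [Hl ->]]; elim: l Hl => [|p l IH] Hl; first by rewrite big_nil.
rewrite big_cons; apply: QD; last by apply: IH => q Hq; apply: Hl; right.
by have [] := Hl p (or_introl erefl); apply: Qp.
Qed.

Lemma setmul0 (A B : S -> Prop) : setmul m A B 0.
Proof. by exists [::]; split => //; rewrite big_nil. Qed.

Lemma setmulD (A B : S -> Prop) x y :
  setmul m A B x -> setmul m A B y -> setmul m A B (x + y).
Proof.
move=> [l1 [H1 E1]] [l2 [H2 E2]]; exists (l1 ++ l2); split; last by rewrite big_cat E1 E2.
by move=> p Hp; case: (List.in_app_or _ _ _ Hp) => ?; [apply: H1 | apply: H2].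
Qed.

Lemma setmul_p (A B : S -> Prop) a b : A a -> B b -> setmul m A B (m a b).
Proof.
move=> Ha Hb; exists [:: (a, b)]; split; last by rewrite big_cons big_nil addr0.
by move=> p [<-|[]].
Qed.

Lemma setmulN (A B : S -> Prop) x : (forall a, A a -> A (- a)) ->
  setmul m A B x -> setmul m A B (- x).
Proof.
move=> HA; move: x; apply: (setmul_ind (Q := fun x => setmul m A B (- x))); first by rewrite oppr0; apply: setmul0.
  by move=> x1 y1 h1 h2; rewrite opprD; apply: setmulD.
by move=> a b Ha Hb; rewrite -(mNl Hr); apply: setmul_p => //; apply: HA.
Qed.

Lemma setmulB (A B : S -> Prop) x y : (forall a, A a -> A (- a)) ->
  setmul m A B x -> setmul m A B y -> setmul m A B (x - y).
Proof. by move=> HA hx hy; apply: setmulD => //; apply: setmulN. Qed.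

Lemma setmul_mono (A B A' B' : S -> Prop) x :
  (forall a, A a -> A' a) -> (forall b, B b -> B' b) ->
  setmul m A B x -> setmul m A' B' x.
Proof.
move=> HA HB; move: x; apply: (setmul_ind (Q := setmul m A' B')); first exact: setmul0.
  by move=> *; apply: setmulD.
by move=> a b Ha Hb; apply: setmul_p; [apply: HA | apply: HB].
Qed.

Lemma setmul_mulr (A B F : S -> Prop) e f :
  (forall b f, B b -> F f -> B (m b f)) ->
  setmul m A B e -> F f -> setmul m A B (m e f).
Proof.
move=> HB He Hf; move: e He; apply: (setmul_ind (Q := fun e => setmul m A B (m e f))).
- by rewrite (m0l Hr); apply: setmul0.
- by move=> x y h1 h2; rewrite (mDl Hr); apply: setmulD.
- by move=> a b Ha Hb; rewrite -(mA Hr); apply: setmul_p => //; apply: HB.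
Qed.

Lemma setmul_mull (A B F : S -> Prop) e f :
  (forall a f, A a -> F f -> A (m f a)) ->
  setmul m A B e -> F f -> setmul m A B (m f e).
Proof.
move=> HA He Hf; move: e He; apply: (setmul_ind (Q := fun e => setmul m A B (m f e))).
- by rewrite (m0r Hr); apply: setmul0.
- by move=> x y h1 h2; rewrite (mDr Hr); apply: setmulD.
- by move=> a b Ha Hb; rewrite (mA Hr); apply: setmul_p => //; apply: HA.
Qed.
End SetMul.

Section Induced.
Variable (G : groupType) (S : zmodType) (T : G -> S -> Prop) (N : G -> Prop).

Lemma U_ind g (Q : S -> Prop) :
  Q 0 -> (forall x y, Q x -> Q y -> Q (x + y)) ->
  (forall k t, N (mul (inv g) k) -> T k t -> Q t) ->
  forall x, induced_component T N g x -> Q x.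
Proof.
move=> Q0 QD Qp x [l [Hl ->]]; elim: l Hl => [|p l IH] Hl; first by rewrite big_nil.
rewrite big_cons; apply: QD; last by apply: IH => q Hq; apply: Hl; right.
by have [] := Hl p (or_introl erefl); apply: Qp.
Qed.

Lemma U0 g : induced_component T N g 0.
Proof. by exists [::]; split => //; rewrite big_nil. Qed.

Lemma UD g x y : induced_component T N g x -> induced_component T N g y ->
  induced_component T N g (x + y).
Proof.
move=> [l1 [H1 E1]] [l2 [H2 E2]]; exists (l1 ++ l2); split; last by rewrite big_cat E1 E2.
by move=> p Hp; case: (List.in_app_or _ _ _ Hp) => ?; [apply: H1 | apply: H2].
Qed.

Lemma U_hom g k t : N (mul (inv g) k) -> T k t -> induced_component T N g t.
Proof.
move=> Hn Ht; exists [:: (k, t)]; split; last by rewrite big_cons big_nil addr0.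
by move=> p [<-|[]].
Qed.

Lemma UN g x : (forall k, is_add_subgroup (T k)) ->
  induced_component T N g x -> induced_component T N g (- x).
Proof.
move=> HT; move: x; apply: (U_ind (Q := fun x => induced_component T N g (- x))); first by rewrite oppr0; apply: U0.
  by move=> x1 y1 h1 h2; rewrite opprD; apply: UD.
move=> k t Hk Ht; apply: (U_hom Hk); have [h0 hB] := HT k.
by rewrite -sub0r; apply: hB.
Qed.
End Induced.

Section Grp.
Variable (G : groupType) (N : G -> Prop).
Hypothesis HN : is_normal_subgroup N.

Lemma Neq x y : x = y -> N x -> N y. Proof. by move=> ->. Qed.

Lemma Nconj' g n : N n -> N (mul (mul (inv g) n) g).
Proof.
case: HN => _ _ _ NC h; have := NC (inv g) n h.
by rewrite invgK.
Qed.

Lemma G1 g k k' k'' : N (mul (inv g) k) -> N (mul g k') -> N (mul (inv g) k'') ->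
  N (mul (inv g) (mul (mul k k') k'')).
Proof.
case: HN => _ NM _ _ h1 h2 h3.
have h2' := Nconj' g h2.
apply: (Neq _ (NM _ _ (NM _ _ h1 h2') h3)).
by rewrite mulKg !mulgA mulgK.
Qed.

Lemma G2 g k : N (mul (inv g) k) -> N (mul (inv (inv g)) (inv k)).
Proof.
case: HN => _ NM NV NC h; have := NC g _ (NV _ h).
by rewrite invgK invgM invgK !mulgA mulgK.
Qed.

Lemma G3 g l : N (mul (inv (inv g)) l) -> N (mul (inv g) (inv l)).
Proof.
case: HN => _ NM NV NC; rewrite invgK => h; have := Nconj' g (NV _ h).
by rewrite invgM !mulgA mulgVK.
Qed.
End Grp.

Definition rok (S : zmodType) (m : S -> S -> S) (P : S -> Prop) (x : S) :=
  exists zs : seq S, (forall z, List.In z zs -> P z) /\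
    forall e, (forall z, List.In z zs -> m z e = z) -> m x e = x.

Section Rok.
Variable (S : zmodType) (m : S -> S -> S) (P : S -> Prop).
Hypothesis Hr : is_nonunital_ring m.

Lemma rok0 : rok m P 0.
Proof. by exists [::]; split => // e _; rewrite (m0l Hr). Qed.

Lemma rokD x y : rok m P x -> rok m P y -> rok m P (x + y).
Proof.
move=> [l1 [H1 E1]] [l2 [H2 E2]]; exists (l1 ++ l2); split.
  by move=> p Hp; case: (List.in_app_or _ _ _ Hp) => ?; [apply: H1 | apply: H2].
move=> e He; rewrite (mDl Hr) E1 ?E2 // => z Hz; apply: He; apply: List.in_or_app; by [left|right].
Qed.

Lemma rok_mull a y : rok m P y -> rok m P (m a y).
Proof. by move=> [l [H1 E1]]; exists l; split => // e He; rewrite -(mA Hr) E1. Qed.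

Lemma rok_P z : P z -> rok m P z.
Proof. by move=> Hz; exists [:: z]; split => [w [<-|[]]|e He] //; apply: He; left. Qed.
End Rok.

Theorem proposition5p8 (G : groupType) (N : G -> Prop)
    (S : zmodType) (m : S -> S -> S) (T : G -> S -> Prop) :
  is_nonunital_ring m ->
  is_normal_subgroup N ->
  nearly_eps_strong m T ->
  nearly_eps_strong_family (@inv G) m (induced_component T N).
Proof.
move=> Hr HN [[Tsub Tmul _ _] Heps] g.
set U := induced_component T N.
have T0 k : T k 0 by case: (Tsub k).
have TB k x y : T k x -> T k y -> T k (x - y) by case: (Tsub k) => _; apply.
have TN k x : T k x -> T k (- x) by move=> h; rewrite -sub0r; apply: TB.
have TD k x y : T k x -> T k y -> T k (x + y).
  by move=> h1 h2; rewrite -[y]opprK; apply: TB => //; apply: TN.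
have UNg h x : U h x -> U h (- x) by apply: UN.
have UmulT h b f : U h b -> T one f -> U h (m b f).
  move=> Hb Hf; move: b Hb; apply: (U_ind (Q := fun b => U h (m b f))).
  - by rewrite (m0l Hr); apply: U0.
  - by move=> x y h1 h2; rewrite (mDl Hr); apply: UD.
  - move=> k t Hk Ht; apply: (U_hom (k := mul k one)); rewrite mulg1 //.
    by have := Tmul _ _ _ _ Ht Hf; rewrite mulg1.
have TmulU h a f : U h a -> T one f -> U h (m f a).
  move=> Ha Hf; move: a Ha; apply: (U_ind (Q := fun a => U h (m f a))).
  - by rewrite (m0r Hr); apply: U0.
  - by move=> x y h1 h2; rewrite (mDr Hr); apply: UD.
  - move=> k t Hk Ht; apply: (U_hom (k := mul one k)); rewrite mul1g //.
    by have := Tmul _ _ _ _ Hf Ht; rewrite mul1g.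
set R := setmul m (U g) (U (inv g)).
set E := fun e => R e /\ T one e.
have E0 : E 0 by split; [apply: setmul0 | apply: T0].
have RmulT e f : R e -> T one f -> R (m e f).
  by move=> He Hf; apply: (setmul_mulr Hr (F := T one)) => // b f' Hb Hf'; apply: UmulT.
have TmulR e f : R e -> T one f -> R (m f e).
  by move=> He Hf; apply: (setmul_mull Hr (F := T one)) => // b f' Hb Hf'; apply: TmulU.
have HE e f : E e -> E f -> E (e + f - m e f).
  move=> [Re Te] [Rf Tf]; split.
    by apply: setmulB => //; [apply: UNg | apply: setmulD | apply: RmulT].
  apply: TB; first exact: TD.
  by have := Tmul _ _ _ _ Te Tf; rewrite mulg1.
split.
  move=> x; split.
  move: x; apply: (setmul_ind (Q := U g)); [exact: U0 | by move=> *; apply: UD |].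
  move=> a c Ha Hc; move: a Ha; apply: (setmul_ind (Q := fun a => U g (m a c))).
  - by rewrite (m0l Hr); apply: U0.
  - by move=> x y h1 h2; rewrite (mDl Hr); apply: UD.
  move=> a b Ha Hb; move: a Ha; apply: (U_ind (Q := fun a => U g (m (m a b) c))).
  - by rewrite !(m0l Hr); apply: U0.
  - by move=> x y h1 h2; rewrite !(mDl Hr); apply: UD.
  move=> k t Hk Ht; move: b Hb; apply: (U_ind (Q := fun b => U g (m (m t b) c))).
  - by rewrite (m0r Hr) (m0l Hr); apply: U0.
  - by move=> x y h1 h2; rewrite (mDr Hr) (mDl Hr); apply: UD.
  move=> k' t' Hk' Ht'; move: c Hc; apply: (U_ind (Q := fun c => U g (m (m t t') c))).
  - by rewrite (m0r Hr); apply: U0.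
  - by move=> x y h1 h2; rewrite (mDr Hr); apply: UD.
  move=> k'' t'' Hk'' Ht''; apply: (U_hom (k := mul (mul k k') k'')).
    by apply: G1 => //; rewrite -(invgK g).
  exact: (Tmul _ _ _ _ (Tmul _ _ _ _ Ht Ht') Ht'').
  move: x; apply: (U_ind (Q := setmul m (setmul m (U g) (U (inv g))) (U g))).
  - exact: setmul0.
  - by move=> *; apply: setmulD.
  move=> k t Hk Ht; have [_ H] := (Heps k).1 t; have := H Ht.
  apply: setmul_mono; last by move=> c; apply: U_hom.
  move=> a; apply: setmul_mono; first by move=> c; apply: U_hom.
  by move=> c; apply: U_hom; apply: G2.
move=> x Hx; split.
- set P := fun z => exists l, N (mul (inv (inv g)) l) /\ setmul m (T (inv l)) (T l) z.
  have [zs [Hzs Hx']] : rok m P x.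
    move: x Hx; apply: (setmul_ind (Q := rok m P)); [exact: rok0 | exact: rokD |].
    move=> a b Ha Hb; apply: rok_mull => //; move: b Hb.
    apply: (U_ind (Q := rok m P)); [exact: rok0 | exact: rokD |].
    move=> k t Hk Ht; have [_ H] := (Heps k).1 t; have {H}Ht2 := H Ht; clear Ht; move: t Ht2.
    apply: (setmul_ind (Q := rok m P)); [exact: rok0 | exact: rokD |].
    move=> a' c' Ha' Hc'; move: a' Ha'.
    apply: (setmul_ind (Q := fun a' => rok m P (m a' c'))).
    - by rewrite (m0l Hr); apply: rok0.
    - by move=> x y h1 h2; rewrite (mDl Hr); apply: rokD.
    move=> a'' b'' Ha'' Hb''; rewrite -(mA Hr); apply: rok_mull => //.
    by apply: rok_P; exists k; split => //; apply: setmul_p.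
  have [e [Ee He]] : exists e, E e /\ forall z, List.In z zs -> m z e = z.
    apply: (tominaga Hr (P := P) HE _ _ E0 Hzs).
  + move=> y e [l [Hl Hy]] [Re Te]; exists l; split => //.
    apply: setmulB => //; first by move=> *; apply: TN.
    apply: (setmul_mulr Hr (F := T one)) => // b f Hb Hf.
    by have := Tmul _ _ _ _ Hb Hf; rewrite mulg1.
  + move=> y [l [Hl Hy]].
    have Hy' : setmul m (T (inv l)) (T (inv (inv l))) y by rewrite invgK.
    have [[r [Hr1 Hr2]] _] := (Heps (inv l)).2 y Hy'.
    exists r; split; last by rewrite -Hr2.
    split.
      apply: setmul_mono Hr1; first by move=> c; apply: U_hom; apply: G3.
      by rewrite invgK => c; apply: U_hom.
    clear Hr2; move: r Hr1; apply: (setmul_ind (Q := T one)); [exact: T0 | exact: TD |].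
    by move=> a b Ha Hb; have := Tmul _ _ _ _ Ha Hb; rewrite invgK mulVg.
  by exists e; split; [case: Ee | rewrite Hx'].
- set P := fun z => exists k, N (mul (inv g) k) /\ setmul m (T k) (T (inv k)) z.
  have Hro := opp_ring Hr.
  have [zs [Hzs Hx']] : rok (fun a b => m b a) P x.
    move: x Hx; apply: (setmul_ind (Q := rok _ P)); [exact: rok0 | exact: rokD |].
    move=> a b Ha Hb; apply: (@rok_mull _ _ P Hro b a); move: a Ha.
    apply: (U_ind (Q := rok _ P)); [exact: rok0 | exact: rokD |].
    move=> k t Hk Ht; have [_ H] := (Heps k).1 t; have {H}Ht2 := H Ht; clear Ht; move: t Ht2.
    apply: (setmul_ind (Q := rok _ P)); [exact: rok0 | exact: rokD |].
    move=> a' c' Ha' Hc'; apply: (@rok_mull _ _ P Hro c' a').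
    by apply: rok_P; exists k.
  have HE' e f : E e -> E f -> E (e + f - m f e).
    move=> [Re Te] [Rf Tf]; split.
      by apply: setmulB => //; [apply: UNg | apply: setmulD | apply: TmulR].
    apply: TB; first exact: TD.
    by have := Tmul _ _ _ _ Tf Te; rewrite mulg1.
  have [e [Ee He]] : exists e, E e /\ forall z, List.In z zs -> m e z = z.
    apply: (tominaga Hro (P := P) HE' _ _ E0 Hzs).
  + move=> y e [k [Hk Hy]] [Re Te]; exists k; split => //.
    apply: setmulB => //; first by move=> *; apply: TN.
    apply: (setmul_mull Hr (F := T one)) => // b f Hb Hf.
    by have := Tmul _ _ _ _ Hf Hb; rewrite mul1g.
  + move=> y [k [Hk Hy]]; have [_ [r [Hr1 Hr2]]] := (Heps k).2 y Hy.
    exists r; split; last by rewrite -Hr2.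
    split.
      apply: setmul_mono Hr1; first by move=> c; apply: U_hom.
      by move=> c; apply: U_hom; apply: G2.
    clear Hr2; move: r Hr1; apply: (setmul_ind (Q := T one)); [exact: T0 | exact: TD |].
    by move=> a b Ha Hb; have := Tmul _ _ _ _ Ha Hb; rewrite mulgV.
  by exists e; split; [case: Ee | rewrite Hx'].
Qed.
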